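(* Let $(X,d)$ be a proper metric space and let $X+_fW$ be a Hausdorff compactification of $X$ with the coarse Karlsson property. Then $X+_fW\in\mathrm{Pers}(\varepsilon_d)$, i.e. every $e\in\varepsilon_d$ is perspective for $X+_fW$.
   Context: $X+_fW$ denotes $X\sqcup W$ with closed sets the $D$ such that $D\cap X$ is closed in $X$, $D\cap W$ closed in $W$ and $f(D\cap X)\subseteq D$, for an admissible $f$ (sending $\emptyset$ to $\emptyset$ and preserving finite unions) from closed sets of $X$ to closed sets of $W$; here it is compact Hausdorff with $X$ dense. $\mathfrak{U}_f$ is the unique uniform structure of $X+_fW$; a set $S$ is $u$-small if $S\times S\subseteq u$. $\varepsilon_d$ is the bounded coarse structure: all $e\subseteq X\times X$ with $\sup\{d(x,y):(x,y)\in e\}<\infty$. A set $e\subseteq X\times X$ is perspective if $\mathrm{Cl}_{(X+_fW)^2}(e)\cap((X+_fW)^2-X^2)\subseteq\{(p,p):p\in W\}$; $\mathrm{Pers}(\varepsilon_d)$ consists of Hausdorff compactifications for which every element of $\varepsilon_d$ is perspective. A coarse arc between $x,y\in X$ is a map $\lambda:[0,t]\to X$ which is a coarse embedding for the metric coarse structures, with $\lambda(0)=x$, $\lambda(t)=y$. A set $\Upsilon$ of coarse arcs is equicoarse if (1) for every $r>0$ there is $s>0$ with $d(\lambda(a),\lambda(b))<s$ whenever $\lambda\in\Upsilon$, $a,b\in\mathrm{dom}\,\lambda$, $|a-b|<r$; and (2) for every $r>0$ there is $s>0$ with $|a-b|<s$ whenever $\lambda\in\Upsilon$ and $d(\lambda(a),\lambda(b))<r$.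 $X+_fW$ has the coarse Karlsson property if there is an equicoarse set $\Upsilon$ containing, for all $x,y\in X$, a coarse arc between $x$ and $y$, such that for every $u\in\mathfrak{U}_f$ there is a bounded $S\subseteq X$ such that every arc in $\Upsilon$ whose image does not meet $S$ has $u$-small image. *)

(* Defs.v *)
From HB Require Import structures.
From mathcomp Require Import all_boot all_order all_algebra.
From mathcomp Require Import all_classical reals topology.
Set Implicit Arguments. Unset Strict Implicit. Unset Printing Implicit Defensive.
Import Order.TTheory GRing.Theory Num.Theory.
Local Open Scope ring_scope.
Local Open Scope classical_set_scope.

Definition is_metric (R : realType) (X : Type) (d : X -> X -> R) : Prop :=
  (forall x y, 0 <= d x y) /\ (forall x y, d x y = 0 <-> x = y) /\
  (forall x y, d x y = d y x) /\ (forall x y z, d x z <= d x y + d y z).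

Definition mclosed (R : realType) (X : Type) (d : X -> X -> R) (D : set X) : Prop :=
  forall x, (forall r : R, 0 < r -> exists y, D y /\ d x y < r) -> D x.

Definition mopen (R : realType) (X : Type) (d : X -> X -> R) (U : set X) : Prop :=
  mclosed d (~` U).

Definition mbounded (R : realType) (X : Type) (d : X -> X -> R) (S : set X) : Prop :=
  exists x0 (r : R), forall y, S y -> d x0 y <= r.

Definition cover_compact (T : Type) (isopen : set T -> Prop) (A : set T) : Prop :=
  forall (I : eqType) (U : I -> set T), (forall i, isopen (U i)) ->
    (forall a, A a -> exists i, U i a) ->
    exists s : seq I, forall a, A a -> exists i, i \in s /\ U i a.

Definition proper_metric (R : realType) (X : Type) (d : X -> X -> R) : Prop :=
  is_metric d /\
  forall S, mclosed d S -> mbounded d S -> cover_compact (mopen d) S.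

Definition admissible (R : realType) (X : Type) (d : X -> X -> R)
  (W : topologicalType) (f : set X -> set W) : Prop :=
  (forall A, mclosed d A -> closed (f A)) /\ f set0 = set0 /\
  (forall A B, mclosed d A -> mclosed d B -> f (A `|` B) = f A `|` f B).

(* closed sets of X +_f W, a topology on the disjoint union X + W *)
Definition sclosed (R : realType) (X : Type) (d : X -> X -> R)
  (W : topologicalType) (f : set X -> set W) (D : set (X + W)) : Prop :=
  mclosed d [set x | D (inl x)] /\ closed [set w | D (inr w)] /\
  f [set x | D (inl x)] `<=` [set w | D (inr w)].

Definition sopen (R : realType) (X : Type) (d : X -> X -> R)
  (W : topologicalType) (f : set X -> set W) (U : set (X + W)) : Prop :=
  sclosed d f (~` U).

Definition hausdorff_compactification (R : realType) (X : Type) (d : X -> X -> R)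
  (W : topologicalType) (f : set X -> set W) : Prop :=
  cover_compact (sopen d f) setT /\
  (forall p q : X + W, p <> q -> exists U V, sopen d f U /\ sopen d f V /\
      U p /\ V q /\ U `&` V = set0) /\
  (forall U, sopen d f U -> (exists p, U p) -> exists x, U (inl x)).

(* the unique uniform structure U_f of the compact Hausdorff space X +_f W:
   the neighbourhoods of the diagonal in (X +_f W)^2 *)
Definition unif_f (R : realType) (X : Type) (d : X -> X -> R)
  (W : topologicalType) (f : set X -> set W) (u : set ((X + W) * (X + W))) : Prop :=
  forall p, exists U V, sopen d f U /\ sopen d f V /\ U p /\ V p /\
    (forall a b, U a -> V b -> u (a, b)).

Definition usmall (X W : Type) (u : set ((X + W) * (X + W))) (S : set X) : Prop :=
  forall a b, S a -> S b -> u (inl a, inl b).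

Definition eps_d (R : realType) (X : Type) (d : X -> X -> R) (e : set (X * X)) : Prop :=
  exists M : R, forall x y, e (x, y) -> d x y <= M.

(* closure of e ⊆ X^2 in (X +_f W)^2 (product topology) *)
Definition closure2 (R : realType) (X : Type) (d : X -> X -> R)
  (W : topologicalType) (f : set X -> set W) (e : set (X * X))
  (pq : (X + W) * (X + W)) : Prop :=
  forall U V, sopen d f U -> sopen d f V -> U pq.1 -> V pq.2 ->
    exists x y, e (x, y) /\ U (inl x) /\ V (inl y).

Definition is_inl (X W : Type) (p : X + W) : Prop := exists x, p = inl x.

Definition perspective (R : realType) (X : Type) (d : X -> X -> R)
  (W : topologicalType) (f : set X -> set W) (e : set (X * X)) : Prop :=
  forall p q, closure2 d f e (p, q) -> ~ (is_inl p /\ is_inl q) ->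
    exists w, p = inr w /\ q = inr w.

(* an arc is a pair (t, lam), lam considered on the domain [0, t] *)
Definition arc (R : realType) (X : Type) := (R * (R -> X))%type.

Definition in_dom (R : realType) (X : Type) (g : arc R X) (a : R) : Prop :=
  0 <= a <= g.1.

(* coarse embedding [0,t] -> X for the metric coarse structures, from x to y *)
Definition coarse_arc (R : realType) (X : Type) (d : X -> X -> R) (x y : X)
  (g : arc R X) : Prop :=
  0 <= g.1 /\ g.2 0 = x /\ g.2 g.1 = y /\
  (forall r : R, 0 < r -> exists s : R, forall a b, in_dom g a -> in_dom g b ->
     `|a - b| < r -> d (g.2 a) (g.2 b) < s) /\
  (forall r : R, 0 < r -> exists s : R, forall a b, in_dom g a -> in_dom g b ->
     d (g.2 a) (g.2 b) < r -> `|a - b| < s).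

Definition arc_image (R : realType) (X : Type) (g : arc R X) : set X :=
  [set z | exists a, in_dom g a /\ g.2 a = z].

Definition equicoarse (R : realType) (X : Type) (d : X -> X -> R)
  (Ups : set (arc R X)) : Prop :=
  (forall r : R, 0 < r -> exists s : R, forall g a b, Ups g -> in_dom g a -> in_dom g b ->
     `|a - b| < r -> d (g.2 a) (g.2 b) < s) /\
  (forall r : R, 0 < r -> exists s : R, forall g a b, Ups g -> in_dom g a -> in_dom g b ->
     d (g.2 a) (g.2 b) < r -> `|a - b| < s).

Definition coarse_Karlsson (R : realType) (X : Type) (d : X -> X -> R)
  (W : topologicalType) (f : set X -> set W) : Prop :=
  exists Ups : set (arc R X),
    (forall g, Ups g -> exists x y, coarse_arc d x y g) /\
    equicoarse d Ups /\
    (forall x y, exists g, Ups g /\ coarse_arc d x y g) /\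
    (forall u, unif_f d f u -> exists S, mbounded d S /\
       forall g, Ups g -> arc_image g `&` S = set0 -> usmall u (arc_image g)).

(* Main.v *)
Require Import Defs.
From mathcomp Require Import all_boot all_order all_algebra.
From mathcomp Require Import all_classical reals topology.
From mathcomp Require Import lra.
Set Implicit Arguments. Unset Strict Implicit.
Import Order.TTheory GRing.Theory Num.Theory.
Local Open Scope ring_scope.
Local Open Scope classical_set_scope.

Section Helpers.
Variables (R : realType) (X : Type) (d : X -> X -> R)
  (W : topologicalType) (f : set X -> set W).

Lemma mclosedU (A B : set X) : mclosed d A -> mclosed d B -> mclosed d (A `|` B).
Proof.
move=> hA hB x hx.
have [Ax|nAx] := pselect (A x); first by left.
have [Bx|nBx] := pselect (B x); first by right.
exfalso.
have : ~ (forall r : R, 0 < r -> exists y, A y /\ d x y < r) by move/hA.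
move/existsNP => [rA /not_implyP [rA0 hrA]].
have : ~ (forall r : R, 0 < r -> exists y, B y /\ d x y < r) by move/hB.
move/existsNP => [rB /not_implyP [rB0 hrB]].
have m0 : 0 < Num.min rA rB by rewrite lt_min rA0 rB0.
have [y [[Ay|By] dy]] := hx _ m0.
- apply: hrA; exists y; split => //; apply: (lt_le_trans dy); rewrite ge_min lexx //.
- apply: hrB; exists y; split => //; apply: (lt_le_trans dy); rewrite ge_min lexx orbT //.
Qed.

Lemma f_mono (A B : set X) : admissible d f -> mclosed d A -> mclosed d B ->
  A `<=` B -> f A `<=` f B.
Proof.
move=> [_ [_ fU]] hA hB AB.
have E : A `|` B = B by apply/setUidPr.
rewrite -{1}E (fU A B hA hB) => w hw; by left.
Qed.

Lemma sopen_bigU (I : Type) (P : I -> Prop) (U : I -> set (X + W)) :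
  admissible d f -> (forall i, P i -> sopen d f (U i)) ->
  sopen d f [set z | exists i, P i /\ U i z].
Proof.
move=> hadm hU.
have h1 : mclosed d [set x | (~` [set z | exists i, P i /\ U i z]) (inl x)].
  move=> x hx [i [Pi Ui]].
  have := (hU i Pi).1 x; apply; last exact: Ui.
  move=> r r0; have [y [hy dy]] := hx r r0; exists y; split => //.
  by move=> Uy; apply: hy; exists i.
split => //; split.
  have -> : [set w | (~` [set z | exists i, P i /\ U i z]) (inr w)] =
     \bigcap_(i in P) [set w | ~ U i (inr w)].
    apply/seteqP; split => w /=.
      by move=> h i Pi Ui; apply: h; exists i.
    by move=> h [i [Pi Ui]]; exact: (h i Pi Ui).
  by apply: closed_bigI => i Pi; exact: (hU i Pi).2.1.
move=> w hw [i [Pi Ui]].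
have := (hU i Pi).2.2 w; apply; last exact: Ui.
apply: (f_mono hadm h1 (hU i Pi).1) hw.
by move=> x /= h Ux; apply: h; exists i.
Qed.

Lemma sopen_I (U V : set (X + W)) : admissible d f ->
  sopen d f U -> sopen d f V -> sopen d f (U `&` V).
Proof.
move=> hadm [hU1 [hU2 hU3]] [hV1 [hV2 hV3]].
have E1 : [set x | (~` (U `&` V)) (inl x)] =
   [set x | (~` U) (inl x)] `|` [set x | (~` V) (inl x)].
  by apply/seteqP; split => x /=; [move/not_andP|move=> h [? ?]; case: h].
have E2 : [set x | (~` (U `&` V)) (inr x)] =
   [set x | (~` U) (inr x)] `|` [set x | (~` V) (inr x)].
  by apply/seteqP; split => x /=; [move/not_andP|move=> h [? ?]; case: h].
split; first by rewrite E1; exact: mclosedU.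
split; first by rewrite E2; exact: closedU.
rewrite E1 E2 hadm.2.2 //.
by move=> w [/hU3 h|/hV3 h]; [left|right].
Qed.

Lemma sopen_setT : admissible d f -> sopen d f setT.
Proof.
move=> hadm.
split; first by move=> x /(_ 1 ltr01) [y [h _]]; exact: h.
have E : [set w | (~` (@setT (X + W))) (inr w)] = set0.
  by apply/seteqP; split => w //= h; exact: h.
split; first by rewrite E; exact: closed0.
have E' : [set x | (~` (@setT (X + W))) (inl x)] = set0.
  by apply/seteqP; split => x //= h; exact: h.
by rewrite E' hadm.2.1.
Qed.

Lemma sopen_set0 : sopen d f set0.
Proof.
split; first by move=> x _ /=.
have E : [set w | (~` (@set0 (X + W))) (inr w)] = setT.
  by apply/seteqP; split => w //= _ h.
split; first by rewrite E; exact: closedT.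
by move=> w _ /=.
Qed.

Lemma sopen_bigI (I : eqType) (B : I -> set (X + W)) (s : seq I) :
  admissible d f -> (forall i, sopen d f (B i)) ->
  sopen d f [set z | forall i, i \in s -> B i z].
Proof.
move=> hadm hB; elim: s => [|a s IH].
  have -> : [set z | forall i, i \in [::] -> B i z] = setT.
    by apply/seteqP; split => z //= _ i.
  exact: (sopen_setT hadm).
have -> : [set z | forall i, i \in a :: s -> B i z] =
    B a `&` [set z | forall i, i \in s -> B i z].
  apply/seteqP; split => z /=.
    move=> h; split; first by apply: h; rewrite inE eqxx.
    by move=> i iis; apply: h; rewrite inE iis orbT.
  move=> [Ba h] i; rewrite inE => /orP [/eqP ->|] //; exact: h.
exact: sopen_I.
Qed.

Definition scompact (K : set (X + W)) : Prop :=
  forall (I : eqType) (U : I -> set (X + W)), (forall i, sopen d f (U i)) ->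
    (forall a, K a -> exists i, U i a) ->
    exists s : seq I, forall a, K a -> exists i, i \in s /\ U i a.

Lemma sep (K : set (X + W)) (q : X + W) : admissible d f ->
  (forall p q : X + W, p <> q -> exists U V, sopen d f U /\ sopen d f V /\
      U p /\ V q /\ U `&` V = set0) ->
  scompact K -> ~ K q ->
  exists A Q, sopen d f A /\ sopen d f Q /\ K `<=` A /\ Q q /\
     (forall z, A z -> Q z -> False).
Proof.
move=> hadm hH hK nq.
have : forall r : X + W, exists AB : set (X + W) * set (X + W),
   sopen d f AB.1 /\ sopen d f AB.2 /\ AB.2 q /\ AB.1 `&` AB.2 = set0 /\
   (K r -> AB.1 r).
  move=> r; have [Kr|nKr] := pselect (K r).
    have rq : r <> q by move=> E; apply: nq; rewrite -E.
    have [U [V [oU [oV [Ur [Vq UV]]]]]] := hH r q rq.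
    by exists (U, V).
  exists (set0, setT); split; first exact: sopen_set0.
  split; first exact: (sopen_setT hadm).
  split => //; split => //; exact: set0I.
move/choice => [g hg].
have [s hs] := hK {classic (X + W)%type} (fun r => (g r).1)
  (fun r => (hg r).1) (fun a Ka => ex_intro (fun i => (g i).1 a) a ((hg a).2.2.2.2 Ka)).
exists [set z | exists i, i \in s /\ (g i).1 z].
exists [set z | forall i, i \in s -> (g i).2 z].
split; first by apply: sopen_bigU => // i _; exact: (hg i).1.
split; first by apply: (@sopen_bigI {classic (X + W)%type}) => // i; exact: (hg i).2.1.
split; first by move=> a Ka; have [i [iis Ui]] := hs a Ka; exists i.
split; first by move=> i _; exact: (hg i).2.2.1.
move=> z [i [iis Az]] Qz.
have : ((g i).1 `&` (g i).2) z by split => //; exact: Qz.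
by rewrite (hg i).2.2.2.1.
Qed.

Lemma scompact_compl (V0 : set (X + W)) :
  Defs.cover_compact (sopen d f) setT -> sopen d f V0 -> scompact (~` V0).
Proof.
move=> hc oV I U hU cov.
pose U' := fun o : option I => match o with Some i => U i | None => V0 end.
have hU' : forall o, sopen d f (U' o) by case.
have cov' : forall a, setT a -> exists o, U' o a.
  move=> a _; have [V0a|nV0a] := pselect (V0 a); first by exists None.
  by have [i Ui] := cov a nV0a; exists (Some i).
have [s hs] := hc (option I) U' hU' cov'.
exists (pmap id s) => a nV0a.
have [[i|] [iis Ua]] := hs a Logic.I; last by case: nV0a.
by exists i; split => //; rewrite mem_pmap map_id.
Qed.

Lemma scompact_ball (N : set X) :
  proper_metric d -> mclosed d N -> mbounded d N ->
  scompact [set z | exists x, z = inl x /\ N x].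
Proof.
move=> [_ hp] Ncl Nb I U hU cov.
have [s hs] := hp N Ncl Nb I (fun i => [set x | U i (inl x)])
  (fun i => (hU i).1) (fun x Nx => cov (inl x) (ex_intro _ x (conj erefl Nx))).
exists s => a [x [-> Nx]].
by have [i [iis Ui]] := hs x Nx; exists i.
Qed.

End Helpers.

Lemma main_case (R : realType) (X : Type) (d : X -> X -> R)
  (W : topologicalType) (f : set X -> set W) :
  proper_metric d -> admissible d f -> hausdorff_compactification d f ->
  coarse_Karlsson d f ->
  forall e : set (X * X), eps_d d e ->
  forall p w, closure2 d f e (p, inr w) -> p <> inr w -> False.
Proof.
move=> hprop hadm [hcpt [hH _]] [Ups [_ [[eq1 eq2] [harc hK]]]] e [M hM] p w hcl hpq.
have [d0 [dxx [dsym dtri]]] := hprop.1.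
have [U0 [V0 [oU0 [oV0 [U0p [V0q U0V0]]]]]] := hH p (inr w) hpq.
have nq : ~ (~` V0) (inr w) by move=> h; apply: h.
have [A1 [Q1 [oA1 [oQ1 [sA1 [Q1q A1Q1]]]]]] :=
  sep hadm hH (scompact_compl hcpt oV0) nq.
pose u := fun ab : (X + W) * (X + W) => ~ (U0 ab.1 /\ Q1 ab.2).
have hu : unif_f d f u.
  move=> r; have [V0r|nV0r] := pselect (V0 r).
    exists V0, V0; do 4 (split => //).
    move=> a b V0a _ [U0a _].
    have : (U0 `&` V0) a by [].
    by rewrite U0V0.
  exists A1, A1; split => //; split => //.
  have A1r := sA1 r nV0r.
  split => //; split => //.
  by move=> a b _ A1b [_ Q1b]; exact: A1Q1 b A1b Q1b.
have [S [[x0 [r0 hS]] hSm]] := hK u hu.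
have M1 : 0 < `|M| + 1 by have := normr_ge0 M; lra.
have [s1 hs1] := eq2 _ M1.
have S1 : 0 < `|s1| + 1 by have := normr_ge0 s1; lra.
have [s2 hs2] := eq1 _ S1.
pose N := [set z | d x0 z <= r0 + s2].
have Ncl : mclosed d N.
  move=> z hz; rewrite /N /=; apply/ler_addgt0Pr => eps eps0.
  have [y [Ny dy]] := hz eps eps0.
  have := dtri x0 y z; rewrite (dsym y z).
  move: Ny; rewrite /N /= => Ny; lra.
have Nb : mbounded d N by exists x0, (r0 + s2).
have nK : ~ [set z | exists x, z = inl x /\ N x] (inr w) by move=> [x [E _]].
have [A2 [Q2 [_ [oQ2 [sA2 [Q2q A2Q2]]]]]] :=
  sep hadm hH (scompact_ball hprop Ncl Nb) nK.
have [x [y [exy [U0x [Q1y Q2y]]]]] :=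
  hcl U0 (Q1 `&` Q2) oU0 (sopen_I hadm oQ1 oQ2) U0p (conj Q1q Q2q).
have nNy : ~ N y.
  by move=> Ny; apply: (A2Q2 _ (sA2 _ (ex_intro _ y (conj erefl Ny))) Q2y).
have [g [Ug [g10 [g0 [g1 _]]]]] := harc x y.
have dxy := hM x y exy.
have dom0 : in_dom g 0 by rewrite /in_dom lexx g10.
have dom1 : in_dom g g.1 by rewrite /in_dom lexx g10.
have hg1 : g.1 < s1.
  have := hs1 g 0 g.1 Ug dom0 dom1.
  rewrite g0 g1 sub0r normrN (ger0_norm g10); apply.
  have := ler_norm M; lra.
have himg : forall z, arc_image g z -> d z y < s2.
  move=> z [a [doma <-]]; rewrite -g1; apply: hs2 => //.
  move: doma; rewrite /in_dom => /andP [a0 a1].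
  rewrite ler0_norm; last by lra.
  have := ler_norm s1; lra.
have hdisj : arc_image g `&` S = set0.
  apply/seteqP; split => // z [iz Sz].
  have := himg z iz; have := hS z Sz; have := dtri x0 z y.
  have : r0 + s2 < d x0 y by rewrite ltNge; apply/negP.
  lra.
have := hSm g Ug hdisj x y.
have ix : arc_image g x by exists 0.
have iy : arc_image g y by exists g.1.
by move=> /(_ ix iy); apply.
Qed.

Theorem mainTheorem16 (R : realType) (X : Type) (d : X -> X -> R)
  (W : topologicalType) (f : set X -> set W) :
  proper_metric d -> admissible d f -> hausdorff_compactification d f ->
  coarse_Karlsson d f ->
  forall e : set (X * X), eps_d d e -> perspective d f e.
Proof.
move=> hp ha hc hk e he p q.
case: p => [x|w1]; case: q => [y|w2] hcl hni.
- by exfalso; apply: hni; split; eexists.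
- by exfalso; apply: (main_case hp ha hc hk he hcl).
- exfalso.
  have he' : eps_d d [set xy | e (xy.2, xy.1)].
    have [M hM] := he; exists M => a b /= h.
    by rewrite hp.1.2.2.1; exact: hM.
  apply: (main_case hp ha hc hk he' (p := inl y) (w := w1)) => //.
  move=> U V oU oV Uq Vp.
  have [a [b [eab [Va Ub]]]] := hcl V U oV oU Vp Uq.
  by exists b, a.
- have [->|ne] := pselect (w1 = w2); first by exists w2.
  exfalso; apply: (main_case hp ha hc hk he hcl).
  by case.
Qed.
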